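(* Let $t,n,k\ge1$ and $d\ge 0$ be integers with $(d+1)\mid t$. Every $d$-runlength constrained $k$-disjunct binary $t\times n$ matrix satisfies $t\ge\min(n,\,1+k(d+1))$.
   Context: A binary $t\times n$ matrix $M$ is $d$-runlength constrained if in every column, any two $1$'s are separated by a run of at least $d$ zeros, i.e. $M_{ij}=M_{i'j}=1$ with $i<i'$ implies $i'-i\ge d+1$. A binary matrix $M$ is $k$-disjunct if for every column $j$ and every set $S$ of at most $k$ columns with $j\notin S$, $\mathsf{supp}(M_{\cdot j})\not\subseteq\bigcup_{j'\in S}\mathsf{supp}(M_{\cdot j'})$, where $\mathsf{supp}$ denotes the support. *)

(* Defs.v *)
From mathcomp Require Import all_boot all_order all_algebra.
Set Implicit Arguments. Unset Strict Implicit. Unset Printing Implicit Defensive.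

Definition col_supp (t n : nat) (M : 'M[bool]_(t, n)) (j : 'I_n) : {set 'I_t} :=
  [set i | M i j].

Definition runlength_constrained (d t n : nat) (M : 'M[bool]_(t, n)) : Prop :=
  forall (j : 'I_n) (i i' : 'I_t), M i j -> M i' j -> (i < i')%N -> (d.+1 <= i' - i)%N.

Definition disjunct (k t n : nat) (M : 'M[bool]_(t, n)) : Prop :=
  forall (j : 'I_n) (S : {set 'I_n}), (#|S| <= k)%N -> j \notin S ->
    ~~ (col_supp M j \subset \bigcup_(j' in S) col_supp M j').

(* Main.v *)
Require Import Defs.
From mathcomp Require Import all_boot all_order all_algebra.
From mathcomp Require Import zify.

Lemma weight_bound (t n d : nat) (M : 'M[bool]_(t, n)) (j : 'I_n) :
  (d.+1 %| t)%N -> runlength_constrained d M ->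
  (#|col_supp M j| <= t %/ d.+1)%N.
Proof.
move=> Hdv Hr.
set A := col_supp M j.
have -> : #|A| = size (map (fun i : 'I_t => (i : nat) %/ d.+1) (enum A)).
  by rewrite size_map cardE.
rewrite -(size_iota 0 (t %/ d.+1)).
apply: uniq_leq_size.
  rewrite map_inj_in_uniq ?enum_uniq //.
  move=> i i'; rewrite !mem_enum !inE => Hi Hi' Heq.
  apply/eqP; apply/negP => /negP Hne.
  have e1 := divn_eq i d.+1. have e2 := divn_eq i' d.+1.
  have m1 := ltn_pmod i (ltn0Sn d). have m2 := ltn_pmod i' (ltn0Sn d).
  rewrite Heq in e1.
  move: (i %/ d.+1 * d.+1)%N e1 e2 => q e1 e2.
  case: (ltngtP i i') => H.
  - have := Hr j i i' Hi Hi' H. lia.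
  - have := Hr j i' i Hi' Hi H. lia.
  - by move: Hne; rewrite (val_inj H) eqxx.
move=> x /mapP [i _ ->]; rewrite mem_iota add0n /=.
rewrite ltn_divLR // divnK //.
Qed.

Theorem lemma1 (t n k d : nat) (M : 'M[bool]_(t, n)) :
  (1 <= t)%N -> (1 <= n)%N -> (1 <= k)%N -> (d.+1 %| t)%N ->
  runlength_constrained d M -> disjunct k M ->
  (minn n (1 + k * d.+1) <= t)%N.
Proof.
move=> Ht Hn Hk Hdv Hr Hdis.
rewrite leqNgt; apply/negP; rewrite leq_min => /andP [Htn Htk].
have Hw : forall j, (#|col_supp M j| <= k)%N.
  move=> j; apply: leq_trans (@weight_bound t n d M j Hdv Hr) _.
  rewrite leq_divLR //; lia.
have priv : forall j : 'I_n, exists i : 'I_t,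
    M i j && [forall j', (j' != j) ==> ~~ M i j'].
  move=> j.
  case: (boolP [exists i, M i j && [forall j', (j' != j) ==> ~~ M i j']]).
    by move=> /existsP [i Hi]; exists i.
  rewrite negb_exists => /forallP Hno.
  exfalso.
  pose c (i : 'I_t) := odflt j [pick j' | (j' != j) && M i j'].
  have Hc : forall i, M i j -> (c i != j) && M i (c i).
    move=> i Hi; rewrite /c; case: pickP => [x Hx //|H0] /=.
    move: (Hno i); rewrite Hi /= negb_forall => /existsP [j' Hj'].
    move: Hj'; rewrite negb_imply negbK => Hj'.
    by move: (H0 j'); rewrite Hj'.
  apply: (negP (Hdis j (c @: col_supp M j) _ _)).
  - exact: leq_trans (leq_imset_card _ _) (Hw j).
  - apply/imsetP => [[i]]; rewrite inE => Hi Hji.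
    by move: (Hc i Hi); rewrite -Hji eqxx.
  - apply/subsetP => i; rewrite inE => Hi.
    apply/bigcupP; exists (c i); first by apply/imsetP; exists i; rewrite ?inE.
    by rewrite inE; case/andP: (Hc i Hi).

pose p (j : 'I_n) := xchoose (priv j).
have Hp : forall j, M (p j) j /\ forall j', j' != j -> ~~ M (p j) j'.
  move=> j; case/andP: (xchooseP (priv j)) => H1 /forallP H2; split => // j' Hj'.
  exact: (implyP (H2 j') Hj').
have inj : injective p.
  move=> j1 j2 Heq; apply/eqP; apply: contraTT isT => Hne.
  have := (Hp j2).2 j1 Hne; rewrite -Heq (Hp j1).1 //.
have := leq_card p inj; rewrite !card_ord; lia.
Qed.
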